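(* Let $R$ be a finite commutative unital ring, $N\ge2$ with $N\in R^{\times}$, and $q\in R$ a root of the $N$-th cyclotomic polynomial over $\mathbb{Z}$. Let $\alpha$ be the exponent of $R^{\times}$ and $k$ the integer with $\alpha=kN$. Let $u,u'\in R^{\times}$, $a,a'\in R$. If $\mathrm{Id}_{H_N^q}(\mathcal{B}_{(u,a)})=\mathrm{Id}_{H_N^q}(\mathcal{B}_{(u',a')})$, then $(u')^k=u^k$.
   Context: $N$ divides $\alpha$ under these hypotheses. $H_N^q$ is the Taft Hopf algebra over $R$: generated by $g,x$ with $g^N=1$, $x^N=0$, $xg=qgx$, $\Delta(g)=g\otimes g$, $\Delta(x)=1\otimes x+x\otimes g$, $\varepsilon(g)=1$, $\varepsilon(x)=0$, free over $R$ with basis $\{g^mx^n:0\le m,n<N\}$. For $u\in R^{\times},a\in R$, $\mathcal{B}_{(u,a)}$ is the $R$-algebra generated by $v_g,v_x$ with $v_g^N=u$, $v_x^N=a$, $v_xv_g=qv_gv_x$, a right $H_N^q$-comodule algebra via $v_g\mapsto v_g\otimes g$, $v_x\mapsto1\otimes x+v_x\otimes g$. Let $Z_i^H$ ($i\ge1$) be copies $\{Z_i^h:h\in H_N^q\}$ of the $R$-module $H_N^q$ and $T=T(\bigoplus_iZ_i^H)$ the tensor algebra with coaction $\delta(Z_i^h)=\sum Z_i^{h_1}\otimes h_2$. $P\in T$ is a polynomial $H_N^q$-identity for a right $H_N^q$-comodule algebra $B$ if $f(P)=0$ for all right $H_N^q$-comodule algebra maps $f:T\to B$; $\mathrm{Id}_{H_N^q}(B)$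 is the set of these. *)

(* Defs.v *)
From HB Require Import structures.
From mathcomp Require Import all_boot all_order all_algebra.
From mathcomp Require Import fingroup finalg abelian cyclotomic.
Set Implicit Arguments. Unset Strict Implicit. Unset Printing Implicit Defensive.
Import GRing.Theory.
Local Open Scope ring_scope.

(* Free R-modules of rank N^2 with basis indexed by pairs (m,n), 0<=m,n<N.
   For H = H_N^q the basis element (m,n) is g^m x^n; for B_(u,a) it is
   v_g^m v_x^n.  Algebras are given by structure constants. *)
Section Taft.
Variables (R : comPzRingType) (N : nat) (q : R).

Definition idx := ('I_N * 'I_N)%type.
Definition vec := idx -> R.
Definition tens := (idx * idx)%type -> R.
Definition table := idx -> idx -> idx -> R. (* coeff of e_k in e_i * e_j *)

Definition mulT (I : finType) (mt : I -> I -> I -> R) (x y : I -> R) : I -> R :=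
  fun k => \sum_(i : I) \sum_(j : I) x i * y j * mt i j k.

Definition powT (I : finType) (mt : I -> I -> I -> R) (one x : I -> R) (n : nat) :=
  iter n (mulT mt x) one.

Definition bvec (m n : nat) : vec := fun k => ((k.1 == m :> nat) && (k.2 == n :> nat))%:R.

(* Taft algebra: g^m x^n * g^m' x^n' = q^(n m') g^(m+m' mod N) x^(n+n'), 0 if n+n' >= N *)
Definition mtH : table := fun i j k =>
  if (i.2 + j.2 < N)%N && (k.1 == ((i.1 + j.1) %% N)%N :> nat) && (k.2 == (i.2 + j.2)%N :> nat)
  then q ^+ (i.2 * j.1)%N else 0.

(* B_(u,a): v_g^m v_x^n * v_g^m' v_x^n' = q^(n m') v_g^(m+m') v_x^(n+n'),
   reduced with v_g^N = u, v_x^N = a *)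
Definition mtB (u a : R) : table := fun i j k =>
  if (k.1 == ((i.1 + j.1) %% N)%N :> nat) && (k.2 == ((i.2 + j.2) %% N)%N :> nat)
  then q ^+ (i.2 * j.1)%N * (if (N <= i.1 + j.1)%N then u else 1)
                        * (if (N <= i.2 + j.2)%N then a else 1)
  else 0.

Definition mtTens (mtA mtC : table) : (idx * idx)%type -> (idx * idx)%type -> (idx * idx)%type -> R :=
  fun i j k => mtA i.1 j.1 k.1 * mtC i.2 j.2 k.2.

Definition pureT (b h : vec) : tens := fun k => b k.1 * h k.2.

(* For A = B_(u,a) (resp. H), image of the basis element v_g^m v_x^n (resp. g^m x^n)
   under the algebra map rho : A -> A (x) H determined by
   v_g |-> v_g (x) g,  v_x |-> 1 (x) x + v_x (x) g
   (resp. Delta(g) = g (x) g, Delta(x) = 1 (x) x + x (x) g). *)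
Definition coactBasis (mtA : table) (i : idx) : tens :=
  let mt := mtTens mtA mtH in
  let one := pureT (bvec 0 0) (bvec 0 0) in
  let rg := pureT (bvec 1 0) (bvec 1 0) in
  let rx := fun k => pureT (bvec 0 0) (bvec 0 1) k + pureT (bvec 0 1) (bvec 1 0) k in
  mulT mt (powT mt one rg i.1) (powT mt one rx i.2).

Definition coact (mtA : table) (b : vec) : tens :=
  fun k => \sum_(i : idx) b i * coactBasis mtA i k.

(* An R-linear map phi : H -> A (given on the basis) is an H-comodule map:
   rho_A (phi h) = (phi (x) id) (Delta h) for every basis element h. *)
Definition comodule_map (mtA : table) (phi : idx -> vec) : Prop :=
  forall h : idx, forall k : idx * idx,
    coact mtA (phi h) k = \sum_(j : idx) coactBasis mtH h (j, k.2) * phi j k.1.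

(* Tensor algebra T = T(\oplus_i Z_i^H): an element is a finite R-linear
   combination of words; a letter (i, h) stands for Z_i^h with h a basis
   element g^m x^n of H (Z_i^H is free on these). *)
Definition Tpoly := seq (R * seq (nat * idx)).

(* algebra map T -> A determined by the linear maps Z_i^H -> A *)
Definition evalT (mtA : table) (phi : nat -> idx -> vec) (P : Tpoly) : vec :=
  fun k => \sum_(c <- P) c.1 *
    foldr (fun l acc => mulT mtA (phi l.1 l.2) acc) (bvec 0 0) c.2 k.

(* Polynomial H-identities: P vanishes under every comodule algebra map T -> A,
   i.e. under every family of comodule maps Z_i^H -> A. *)
Definition IdH (mtA : table) (P : Tpoly) : Prop :=
  forall phi : nat -> idx -> vec, (forall i, comodule_map mtA (phi i)) ->
    forall k, evalT mtA phi P k = 0.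

End Taft.

(* Main.v *)
Require Import Defs.
From HB Require Import structures.
From mathcomp Require Import all_boot all_order all_algebra.
From mathcomp Require Import fingroup finalg abelian cyclotomic.
From mathcomp Require Import ring zify.
From Stdlib Require Import FunctionalExtensionality.
Import GRing.Theory.
Local Open Scope ring_scope.

Section Alg.
Variables (R : comPzRingType) (n : nat) (q : R).
Local Notation N := n.+2.
Local Notation idx := (idx N).
Local Notation tens := (tens R N).
Local Notation TH := (mtTens (mtH q) (mtH q)).
Local Notation TB u a := (mtTens (mtB q u a) (mtH q)).
Local Notation bv := (@bvec R N).

Lemma bvecE m1 m2 (d : idx) : (m1 < N)%N -> (m2 < N)%N ->
  bv m1 m2 d = (d == (inord m1, inord m2))%:R.
Proof. by case: d => d1 d2 h1 h2; rewrite /bvec xpair_eqE -!val_eqE /= !inordK. Qed.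

Lemma sum_ind (T : finType) (i0 : T) (F : T -> R) :
  \sum_i (i == i0)%:R * F i = F i0.
Proof.
rewrite (bigD1 i0) // eqxx mul1r big1; first exact: addr0.
by move=> i /negbTE ->; rewrite mul0r.
Qed.
Lemma sum_bvec m1 m2 (F : idx -> R) : (m1 < N)%N -> (m2 < N)%N ->
  \sum_d bv m1 m2 d * F d = F (inord m1, inord m2).
Proof.
move=> h1 h2; rewrite -sum_ind; apply: eq_bigr => d _; by rewrite bvecE.
Qed.

Lemma noover u a (i j k : idx) : (i.1 + j.1 < N)%N -> (i.2 + j.2 < N)%N ->
  mtB q u a i j k = mtH q i j k.
Proof.
move=> h1 h2; rewrite /mtB /mtH h2 (modn_small h1) (modn_small h2).
have f1 : (N <= i.1 + j.1)%N = false by rewrite leqNgt h1.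
have f2 : (N <= i.2 + j.2)%N = false by rewrite leqNgt h2.
by rewrite f1 f2 !mulr1.
Qed.
Definition supp (t : tens) (m1 n1 : nat) :=
  forall k : idx * idx, ((m1 < k.1.1) || (n1 < k.1.2))%N -> t k = 0.

Lemma mul_supp u a x y m1 n1 m2 n2 : supp x m1 n1 -> supp y m2 n2 ->
  (m1 + m2 < N)%N -> (n1 + n2 < N)%N ->
  mulT (TB u a) x y = mulT TH x y /\ supp (mulT TH x y) (m1 + m2) (n1 + n2).
Proof.
move=> sx sy hm hn; split.
  apply: functional_extensionality => k; apply: eq_bigr => i _; apply: eq_bigr => j _.
  case: (boolP ((m1 < i.1.1) || (n1 < i.1.2))%N) => [/sx->|hi]; first by rewrite !mul0r.
  case: (boolP ((m2 < j.1.1) || (n2 < j.1.2))%N) => [/sy->|hj]; first by rewrite !mulr0 !mul0r.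
  rewrite /mtTens noover //; move: hi hj; rewrite !negb_or -!leqNgt => /andP[h1 h2] /andP[h3 h4].
    exact: leq_ltn_trans (leq_add h1 h3) hm.
  exact: leq_ltn_trans (leq_add h2 h4) hn.
move=> k hk; rewrite /mulT big1 // => i _; rewrite big1 // => j _.
case: (boolP ((m1 < i.1.1) || (n1 < i.1.2))%N) => [/sx->|hi]; first by rewrite !mul0r.
case: (boolP ((m2 < j.1.1) || (n2 < j.1.2))%N) => [/sy->|hj]; first by rewrite !mulr0 !mul0r.
rewrite /mtTens /mtH; case: ifP => [/andP[/andP[_ /eqP e1] /eqP e2]|_]; last by rewrite !mul0r mulr0.
move: hi hj; rewrite !negb_or -!leqNgt => /andP[h1 h2] /andP[h3 h4].
have l1 := leq_add h1 h3; have l2 := leq_add h2 h4.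
have e1' : (nat_of_ord k.1.1 = i.1.1 + j.1.1)%N by rewrite e1 modn_small // (leq_ltn_trans l1 hm).
by move: hk; rewrite e1' e2 !ltnNge l1 l2.
Qed.
Arguments mul_supp u a {x y m1 n1 m2 n2}.
Lemma supp_pure m1 n1 h : supp (pureT (bv m1 n1) h) m1 n1.
Proof.
move=> k hk; rewrite /pureT /bvec.
by case/orP: hk => h'; rewrite ?(gtn_eqF h') ?andbF mul0r.
Qed.

Lemma supp_add t1 t2 m1 n1 : supp t1 m1 n1 -> supp t2 m1 n1 ->
  supp (fun k => t1 k + t2 k) m1 n1.
Proof. by move=> s1 s2 k hk; rewrite s1 // s2 // addr0. Qed.

Lemma supp_mono t m1 n1 m2 n2 : supp t m1 n1 -> (m1 <= m2)%N -> (n1 <= n2)%N ->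
  supp t m2 n2.
Proof.
move=> st h1 h2 k hk; apply: st; case/orP: hk => h.
  by rewrite (leq_ltn_trans h1 h).
by rewrite (leq_ltn_trans h2 h) orbT.
Qed.

Local Notation one := (pureT (bv 0 0) (bv 0 0)).

Lemma pow_supp u a x m1 n1 : supp x m1 n1 -> forall m, (m * m1 < N)%N -> (m * n1 < N)%N ->
  powT (TB u a) one x m = powT TH one x m /\ supp (powT TH one x m) (m * m1) (m * n1).
Proof.
move=> sx; elim=> [|m IH] h1 h2.
  by split => //; rewrite !mul0n; apply: supp_pure.
have h1' : (m * m1 < N)%N by apply: leq_ltn_trans h1; rewrite leq_mul2r leqnSn orbT.
have h2' : (m * n1 < N)%N by apply: leq_ltn_trans h2; rewrite leq_mul2r leqnSn orbT.
have [e s] := IH h1' h2'.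
have hm : (m1 + m * m1 < N)%N by rewrite -mulSn.
have hn : (n1 + m * n1 < N)%N by rewrite -mulSn.
have [e' s'] := mul_supp u a sx s hm hn.
rewrite /powT /=; rewrite /powT in e s; rewrite e; split => //.
Qed.

Arguments pow_supp u a {x m1 n1}.
Lemma coact_eq u a (i : idx) : coactBasis q (mtB q u a) i = coactBasis q (mtH q) i.
Proof.
rewrite /coactBasis /=.
have a1 : (i.1 * 1 < N)%N by rewrite muln1.
have a2 : (i.1 * 0 < N)%N by rewrite muln0.
have [e1 s1] := pow_supp u a (supp_pure 1 0 (bv 1 0)) i.1 a1 a2.
have sx : supp (fun k => pureT (bv 0 0) (bv 0 1) k + pureT (bv 0 1) (bv 1 0) k) 0 1.
  apply: supp_add; last exact: supp_pure.
  exact: supp_mono (supp_pure 0 0 _) _ _.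
have b1 : (i.2 * 0 < N)%N by rewrite muln0.
have b2 : (i.2 * 1 < N)%N by rewrite muln1.
have [e2 s2] := pow_supp u a sx i.2 b1 b2.
rewrite e1 e2.
have c1 : (i.1 * 1 + i.2 * 0 < N)%N by rewrite muln1 muln0 addn0.
have c2 : (i.1 * 0 + i.2 * 1 < N)%N by rewrite muln0 muln1 add0n.
have [h _] := mul_supp u a s1 s2 c1 c2; exact: h.
Qed.
Definition I3 (a p1 p2 : nat) : idx * idx := ((inord a, ord0), (inord p1, inord p2)).

Definition form (z : tens) (a p1 p2 : nat) :=
  forall (c : idx) (j : idx), (c.2 == 0 :> nat) -> z (c, j) = (c.1 == a :> nat)%:R * bv p1 p2 j.

Lemma formE z a p1 p2 : (a < N)%N -> (p1 < N)%N -> (p2 < N)%N -> form z a p1 p2 ->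
  forall i : idx * idx, (i.1.2 == 0 :> nat) -> z i = (i == I3 a p1 p2)%:R.
Proof.
move=> ha h1 h2 hz [[c1 c2] j] /= h0.
rewrite hz // bvecE // -natrM mulnb /I3 !xpair_eqE.
have -> : (c2 == ord0) = true by rewrite -val_eqE.
by rewrite -(inj_eq val_inj) /= inordK // andbT.
Qed.

Lemma mtH_c0 (d d' c : idx) : c.2 == 0 :> nat ->
  mtH q d d' c = ((d.2 == 0 :> nat) && (d'.2 == 0 :> nat) && (c.1 == ((d.1 + d'.1) %% N)%N :> nat))%:R.
Proof.
move/eqP=> c2; rewrite /mtH c2 (eq_sym 0%N) addn_eq0.
case: d => [d1 [[|x] hx]]; case: d' => [d1' [[|y] hy]] /=;
  rewrite ?andbF //.
by rewrite eqxx andbT mul0n expr0; case: (_ == _).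
Qed.

Lemma mtH_bv p1 p2 s1 s2 (j : idx) : (p1 < N)%N -> (p2 < N)%N -> (s1 < N)%N -> (s2 < N)%N ->
  (p2 + s2 < N)%N ->
  mtH q (inord p1, inord p2) (inord s1, inord s2) j = q ^+ (p2 * s1)%N * bv ((p1 + s1) %% N)%N (p2 + s2)%N j.
Proof.
move=> h1 h2 h3 h4 h5; rewrite /mtH /bvec /= !inordK // h5 /=.
by case: (_ && _); rewrite ?mulr1 ?mulr0.
Qed.

Lemma I3_2 (i : idx * idx) a p1 p2 : i == I3 a p1 p2 -> i.1.2 == 0 :> nat.
Proof. by move/eqP->. Qed.

Lemma restr_mul x y a b p1 p2 s1 s2 : (a < N)%N -> (b < N)%N -> (p1 < N)%N -> (p2 < N)%N ->
  (s1 < N)%N -> (s2 < N)%N -> (p2 + s2 < N)%N -> (p2 * s1 = 0)%N ->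
  form x a p1 p2 -> form y b s1 s2 ->
  form (mulT TH x y) ((a + b) %% N)%N ((p1 + s1) %% N)%N (p2 + s2)%N.
Proof.
move=> ha hb h1 h2 h3 h4 h5 h6 fx fy c j c0.
have step : forall i i', x i * y i' * TH i i' (c, j) = (i == I3 a p1 p2)%:R *
   ((i' == I3 b s1 s2)%:R * ((c.1 == ((a + b) %% N)%N :> nat)%:R * bv ((p1 + s1) %% N)%N (p2 + s2)%N j)).
  move=> i i'; rewrite /mtTens /= (mtH_c0 _ _ _ c0).
  case h: (i.1.2 == 0 :> nat); case h': (i'.1.2 == 0 :> nat); rewrite /=.
  - rewrite (@formE x a p1 p2 ha h1 h2 fx) // (@formE y b s1 s2 hb h3 h4 fy) //.
    case: eqVneq => [->|_]; last by rewrite !mul0r.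
    case: eqVneq => [->|_]; last by rewrite /= !(mul0r, mulr0, mul1r).
    rewrite /= !mul1r /I3 /= !inordK // mtH_bv // h6 expr0 mul1r.
    by [].
  - rewrite mul0r mulr0.
    have -> : (i' == I3 b s1 s2) = false by apply: contraFF h' => /I3_2.
    by rewrite mul0r mulr0.
  - rewrite mul0r mulr0.
    have -> : (i == I3 a p1 p2) = false by apply: contraFF h => /I3_2.
    by rewrite mul0r.
  - rewrite mul0r mulr0.
    have -> : (i == I3 a p1 p2) = false by apply: contraFF h => /I3_2.
    by rewrite mul0r.
rewrite /mulT.
under eq_bigr => i _ do under eq_bigr => i' _ do rewrite step.
under eq_bigr => i _ do rewrite -mulr_sumr.
by rewrite sum_ind sum_ind.
Qed.

Local Notation rg := (pureT (bv 1 0) (bv 1 0)).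
Local Notation rx := (fun k => pureT (bv 0 0) (bv 0 1) k + pureT (bv 0 1) (bv 1 0) k).

Lemma form_pure a p1 p2 : form (pureT (bv a 0) (bv p1 p2)) a p1 p2.
Proof. by move=> c j c0; rewrite /pureT /bvec /= c0 andbT. Qed.

Lemma form_rx : form rx 0 0 1.
Proof.
move=> c j c0; rewrite /pureT /bvec /= (eqP c0) andbT /=.
by rewrite andbF mul0r addr0.
Qed.

Lemma form_powg m : (m < N)%N -> form (powT TH one rg m) m m 0.
Proof.
elim: m => [|m IH] hm; first exact: form_pure.
have hm' : (m < N)%N by apply: ltnW.
have := @restr_mul rg (powT TH one rg m) 1 m 1 0 m 0 isT hm' isT isT hm' isT isT
  (mul0n _) (form_pure _ _ _) (IH hm').
by rewrite add1n add0n modn_small.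
Qed.

Lemma form_powx m : (m < N)%N -> form (powT TH one rx m) 0 0 m.
Proof.
elim: m => [|m IH] hm; first exact: form_pure.
have hm' : (m < N)%N by apply: ltnW.
have := @restr_mul rx (powT TH one rx m) 0 0 0 1 0 m isT isT isT isT isT hm' hm
  (muln0 _) form_rx (IH hm').
by rewrite add0n add1n mod0n.
Qed.

Lemma form_coactH (i : idx) : form (coactBasis q (mtH q) i) i.1 i.1 i.2.
Proof.
have := @restr_mul (powT TH one rg i.1) (powT TH one rx i.2) i.1 0 i.1 0 0 i.2 (ltn_ord _) isT (ltn_ord _) isT isT (ltn_ord _)
  (ltn_ord _) (mul0n _) (@form_powg i.1 (ltn_ord i.1)) (@form_powx i.2 (ltn_ord i.2)).
by rewrite !addn0 add0n modn_small.
Qed.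

Lemma inord0 : (inord 0 : 'I_N) = ord0.
Proof. by apply: val_inj; rewrite /= inordK. Qed.

Lemma one_val (i : idx * idx) : one i = (i == I3 0 0 0)%:R.
Proof.
case: i => [[c1 c2] [j1 j2]]; rewrite /pureT !bvecE //= -natrM mulnb /I3 !xpair_eqE.
by rewrite !inord0 andbA.
Qed.

Lemma mtH_unit (d e : idx) : mtH q d (ord0, ord0) e = (e == d)%:R.
Proof.
case: d e => [d1 d2] [e1 e2]; rewrite /mtH /= !addn0 modn_small // ltn_ord muln0 expr0 xpair_eqE.
by rewrite -!(inj_eq val_inj) /=; case: (_ && _).
Qed.

Lemma pair_eq2 (i k : idx * idx) : ((k.1 == i.1) && (k.2 == i.2)) = (i == k).
Proof. by case: i k => [i1 i2] [k1 k2]; rewrite xpair_eqE /= (eq_sym k1) (eq_sym k2). Qed.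

Lemma mul_one x : mulT TH x one = x.
Proof.
apply: functional_extensionality => k; rewrite /mulT.
have e : forall i i', x i * one i' * TH i i' k = (i' == I3 0 0 0)%:R * (x i * TH i i' k).
  by move=> i i'; rewrite one_val mulrAC mulrC.
under eq_bigr => i _ do under eq_bigr => i' _ do rewrite e.
under eq_bigr => i _ do rewrite sum_ind.
have e2 : forall i, x i * TH i (I3 0 0 0) k = (i == k)%:R * x i.
  move=> i; rewrite /mtTens /I3 /= !inord0 !mtH_unit -natrM mulnb pair_eq2.
  by rewrite mulrC.
under eq_bigr => i _ do rewrite e2.
by rewrite sum_ind.
Qed.

Definition G : idx := (inord 1, inord 0).

Lemma coactH_G : coactBasis q (mtH q) G = rg.
Proof.
rewrite /coactBasis /G /= !inordK //.
rewrite /powT /=.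
by rewrite !mul_one.
Qed.

Lemma comod_G (u a : R) (phi : idx -> vec R N) : comodule_map q (mtB q u a) phi ->
  forall i, i != G -> phi G i = 0.
Proof.
move=> hc i0 ne; have := hc G ((i0.1, ord0), i0).
rewrite /coact.
have e1 : forall i, phi G i * coactBasis q (mtB q u a) i ((i0.1, ord0), i0) = (i == i0)%:R * phi G i.
  move=> [i1 i2]; rewrite coact_eq form_coactH // bvecE // !inord_val /=.
  case: (eqVneq i0 (i1, i2)) => [->|ne']; first by rewrite /= (eq_refl (nat_of_ord i1)) mulr1 mul1r mulr1.
  by rewrite /= !mulr0 mul0r.
under eq_bigr => i _ do rewrite e1.
rewrite sum_ind => ->; apply: big1 => j _.
rewrite coactH_G /pureT /= [bv 1 0 i0]bvecE //.
have -> : (i0 == (inord 1, inord 0)) = false by apply/negbTE.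
by rewrite mulr0 mul0r.
Qed.

Lemma psi_comod u a : comodule_map q (mtB q u a) (fun h : idx => bv h.1 h.2).
Proof.
move=> [h1 h2] [k1 k2]; rewrite /coact sum_bvec // !inord_val coact_eq /=.
have e : forall j : idx, coactBasis q (mtH q) (h1, h2) (j, k2) * bv j.1 j.2 k1 =
   (j == k1)%:R * coactBasis q (mtH q) (h1, h2) (j, k2).
  by move=> [j1 j2]; rewrite bvecE // !inord_val eq_sym mulrC.
under eq_bigr => j _ do rewrite e.
by rewrite sum_ind.
Qed.

Lemma arith m : (m.+1 %% N = (1 + m %% N) %% N)%N /\ ((N <= 1 + m %% N) = (N %| m.+1))%N.
Proof.
split; first by rewrite modnDmr add1n.
have := modnS m N; case: ifP => hd e.
  have hd' : (N %| 1 + m %% N)%N by rewrite /dvdn modnDmr add1n -/(dvdn N m.+1) hd.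
  by apply: dvdn_leq hd'; rewrite add1n.
by rewrite leqNgt add1n -e ltn_pmod.
Qed.

Lemma powB u a (X : vec R N) r : (forall i, X i = r * bv 1 0 i) -> forall m,
  iter m (mulT (mtB q u a) X) (bv 0 0) = (fun k => r ^+ m * u ^+ (m %/ N) * bv (m %% N) 0 k).
Proof.
move=> hX; elim=> [|m IH].
  by apply: functional_extensionality => k; rewrite div0n mod0n !expr0 !mul1r.
rewrite [iter _ _ _]/= IH; apply: functional_extensionality => k; rewrite /mulT.
set C := r ^+ m * u ^+ (m %/ N).
have e : forall i j, X i * (C * bv (m %% N) 0 j) * mtB q u a i j k =
   bv 1 0 i * (bv (m %% N) 0 j * (r * C * mtB q u a i j k)).
  by move=> i j; rewrite hX; ring.
under eq_bigr => i _ do under eq_bigr => j _ do rewrite e.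
under eq_bigr => i _ do rewrite -mulr_sumr.
rewrite sum_bvec // sum_bvec ?ltn_pmod //.
rewrite /mtB /= !inordK ?ltn_pmod // add0n mod0n mul0n expr0 mul1r mulr1.
have [a1 a2] := arith m.
rewrite -a1 a2 /bvec divnS // /C.
case: (_ && _); last by rewrite /= !mulr0.
by case: (N %| m.+1)%N; rewrite /= ?add1n ?add0n ?exprS ?mulr1; ring.
Qed.

End Alg.

Lemma ring_period (R : finComUnitRingType) :
  exists M : nat, forall r : R, r ^+ (M + exponent [set: {unit R}]) = r ^+ M.
Proof.
set n := (#|R|.+1)`!.
exists n => r.
have: ~~ injectiveb (fun t : 'I_(#|R|.+1) => r ^+ t.+1).
  apply/injectiveP => inj; have := leq_card _ inj.
  by rewrite card_ord ltnn.
case/injectivePn => x [y] neq eqxy.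
have [i [p [p0 [ip [pR per]]]]] : exists i p, (0 < p)%N /\ (i <= #|R|.+1)%N /\ (p <= #|R|)%N
   /\ r ^+ (i + p) = r ^+ i.
  have hx := ltn_ord x; have hy := ltn_ord y.
  case: (ltngtP x y) => [xy|yx|xy]; last by move: neq; rewrite (val_inj xy) eqxx.
    exists x.+1, (y - x)%N; split; first by lia.
    split; first by lia. split; first by lia.
    by rewrite eqxy; congr (_ ^+ _); lia.
  exists y.+1, (x - y)%N; split; first by lia.
  split; first by lia. split; first by lia.
  by rewrite -eqxy; congr (_ ^+ _); lia.
have perS : forall s c, r ^+ (i + s + c * p) = r ^+ (i + s).
  move=> s; elim=> [|c IH]; first by rewrite mul0n addn0.
  have -> : (i + s + c.+1 * p = (i + p) + (s + c * p))%N by lia.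
  by rewrite exprD per -exprD addnA IH.
have ni : (i <= n)%N.
  apply: leq_trans ip _; rewrite /n; exact: fact_geq.
have pn : (p %| n)%N.
  rewrite /n dvdn_fact // p0 /=; exact: leqW.
have ee : r ^+ n * r ^+ n = r ^+ n.
  rewrite -exprD.
  have -> : (n + n = i + (n - i) + (n %/ p) * p)%N by rewrite divnK //; lia.
  by rewrite perS; congr (_ ^+ _); lia.
set e := r ^+ n in ee.
have n0 : (0 < n)%N by rewrite /n fact_gt0.
have rs : r * r ^+ n.-1 = e by rewrite -exprS prednK.
set s := r ^+ n.-1 in rs.
set w := r * e + (1 - e).
have wv : w * (s * e + (1 - e)) = 1.
  apply/eqP; rewrite -subr_eq0; apply/eqP.
  have -> : w * (s * e + (1 - e)) - 1 = (r + s) * (e - e * e) + (r * s - e) * (e * e)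
     + (e + 2) * (e * e - e) by rewrite /w; ring.
  by rewrite ee rs !subrr !mulr0 !mul0r !addr0.
have wU : w \is a GRing.unit.
  by apply/unitrP; exists (s * e + (1 - e)); rewrite mulrC wv.
have wa : w ^+ exponent [set: {unit R}] = 1.
  have := expg_exponent (in_setT (FinRing.Unit wU)).
  by move/(congr1 val); rewrite FinRing.val_unitX.
have wj : forall j, w ^+ j = r ^+ j * e + (1 - e).
  elim=> [|j IH]; first by rewrite !expr0 mul1r addrC subrK.
  rewrite exprSr IH; apply/eqP; rewrite -subr_eq0; apply/eqP.
  have -> : (r ^+ j * e + (1 - e)) * w - (r ^+ j.+1 * e + (1 - e)) =
     (e * e - e) * (r ^+ j.+1 - r ^+ j - r + 1) by rewrite /w exprS; ring.
  by rewrite ee subrr mul0r.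
move: wa; rewrite wj => h.
have hra : r ^+ exponent [set: {unit R}] * e = e.
  transitivity ((r ^+ exponent [set: {unit R}] * e + (1 - e)) - (1 - e)); first by rewrite addrK.
  by rewrite h; ring.
by rewrite exprD mulrC hra.
Qed.

Lemma foldr_nseq (A B : Type) (f : A -> B -> B) z m x : foldr f z (nseq m x) = iter m (f x) z.
Proof. by elim: m => //= m ->. Qed.

Theorem proposition3p6 (R : finComUnitRingType) (N : nat) (q : R) (k : nat)
    (u u' a a' : R) :
  (2 <= N)%N ->
  (N%:R : R) \is a GRing.unit ->
  root (map_poly intr 'Phi_N) q ->
  exponent [set: {unit R}] = (k * N)%N ->
  u \is a GRing.unit -> u' \is a GRing.unit ->
  (forall P : Tpoly R N, @IdH R N q (@mtB R N q u a) P <-> @IdH R N q (@mtB R N q u' a') P) ->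
  u' ^+ k = u ^+ k.
Proof.
move=> hN _ _ hexp hu hu' hid.
have [n hn] : exists n, N = n.+2 by exists N.-2; lia.
subst N.
have [M hM] := ring_period R.
rewrite hexp in hM.
pose P : Tpoly R n.+2 := [:: (1, nseq (M + k * n.+2) (1%N, G n));
                             (- u ^+ k, nseq M (1%N, G n))].
have evalP : forall (uu aa : R) phi r, (forall i, phi 1%N (G n) i = r * bvec R 1 0 i) ->
    forall kk, evalT (mtB q uu aa) phi P kk =
      uu ^+ (M %/ n.+2) * bvec R (M %% n.+2) 0 kk * (r ^+ (M + k * n.+2) * uu ^+ k - u ^+ k * r ^+ M).
  move=> uu aa phi r hX kk.
  rewrite /evalT big_cons big_cons big_nil /= !foldr_nseq !(@powB _ _ q uu aa _ r hX).
  rewrite (addnC M) divnMDl // modnMDl addnC.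
  by rewrite !exprD; ring.
have hP : IdH q (mtB q u a) P.
  move=> phi hphi kk.
  have hX : forall i, phi 1%N (G n) i = phi 1%N (G n) (G n) * bvec R 1 0 i.
    move=> i; rewrite bvecE //.
    case: (eqVneq i (G n)) => [->|ne]; first by rewrite /= mulr1.
    by rewrite (@comod_G _ _ q u a _ (hphi 1%N) _ ne) /= mulr0.
  by rewrite (evalP _ _ _ _ hX) hM; ring.
have := (proj1 (hid P) hP) (fun _ h => bvec R h.1 h.2) (fun _ => @psi_comod _ _ q u' a')
  (inord (M %% n.+2), ord0).
have hX : forall i : idx n.+2, (fun _ (h : idx n.+2) => bvec R h.1 h.2) 1%N (G n) i = 1 * bvec R 1 0 i.
  by move=> i; rewrite mul1r /G /= !inordK.
rewrite (evalP _ _ _ _ hX) bvecE ?ltn_pmod // inord0 eqxx mulr1 !expr1n mulr1 mul1r.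
move=> h; apply/eqP; rewrite -subr_eq0; apply/eqP.
apply: (mulrI (unitrX _ hu')); rewrite mulr0; exact: h.
Qed.
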